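(* For all graphs $H$ and $\Gamma$, we have $$\mathrm{ex}(\Gamma,\mathcal{P}_H)\ \ge\ \frac{1}{2}\,e(\Gamma)\,\mathrm{ex}(\chi(\overline{\Gamma}),\mathcal{F}_H)\Big/\binom{\chi(\overline{\Gamma})}{2}.$$
   Context: $\mathcal{P}_H$ is the property of not containing $H$ as an induced subgraph; $\mathrm{ex}(\Gamma,\mathcal{P})$ is the maximum number of edges of a subgraph $G\subseteq\Gamma$ that belongs to $\mathcal{P}$. For a family $\mathcal{F}$ of graphs, $\mathrm{ex}(k,\mathcal{F})$ is the maximum number of edges in a $k$-vertex graph containing no member of $\mathcal{F}$ as a subgraph. For a vertex partition $V(H)=V_1\sqcup\dots\sqcup V_k$ into cliques of $H$, the clique quotient is the graph on $\{1,\dots,k\}$ in which $i\ne j$ are adjacent if some vertex of $V_i$ is adjacent to some vertex of $V_j$; $\mathcal{F}_H$ is the family of bipartite graphs that are clique quotients of $H$. $\overline{\Gamma}$ is the complement of $\Gamma$ and $\chi$ denotes chromatic number. *)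

(* Defs.v *)
From mathcomp Require Import all_boot all_order all_algebra.
Set Implicit Arguments. Unset Strict Implicit. Unset Printing Implicit Defensive.

Definition simple_graph (V : finType) (e : rel V) : bool :=
  [forall x, forall y, e x y == e y x] && [forall x, ~~ e x x].

Definition edges (V : finType) (e : rel V) : {set {set V}} :=
  [set [set x; y] | x in V, y in V & e x y].
Definition nedges (V : finType) (e : rel V) : nat := #|edges e|.

Definition graph_of (V : finType) (S : {set {set V}}) : rel V :=
  fun x y => (x != y) && ([set x; y] \in S).

Definition compl (V : finType) (e : rel V) : rel V :=
  fun x y => (x != y) && ~~ e x y.

Definition colourable (V : finType) (e : rel V) (k : nat) : bool :=
  [exists f : {ffun V -> 'I_k}, [forall x, forall y, e x y ==> (f x != f y)]].
Definition chi (V : finType) (e : rel V) : nat :=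
  \big[minn/#|V|]_(k < #|V|.+1 | colourable e k) k.

Definition contains_induced (W V : finType) (h : rel W) (g : rel V) : bool :=
  [exists f : {ffun W -> V},
     injectiveb f && [forall x, forall y, g (f x) (f y) == h x y]].

Definition contains_sub (W V : finType) (F : rel W) (g : rel V) : bool :=
  [exists f : {ffun W -> V},
     injectiveb f && [forall x, forall y, F x y ==> g (f x) (f y)]].

(* ex(Gamma, P_H): max number of edges of a spanning subgraph G of Gamma
   with no induced copy of H *)
Definition ex_ind (W V : finType) (h : rel W) (g : rel V) : nat :=
  \max_(S : {set {set V}} | (S \subset edges g) && ~~ contains_induced h (graph_of S))
     #|S|.

Definition clique_partition (W : finType) (h : rel W) (k : nat) (p : {ffun W -> 'I_k}) : bool :=
  [forall i : 'I_k, exists x, p x == i] &&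
  [forall x, forall y, ((x != y) && (p x == p y)) ==> h x y].

Definition quotient (W : finType) (h : rel W) (k : nat) (p : {ffun W -> 'I_k}) : rel 'I_k :=
  fun i j => (i != j) && [exists x, exists y, [&& p x == i, p y == j & h x y]].

Definition bipartite (V : finType) (e : rel V) : bool := colourable e 2.

(* g contains no member of F_H (the bipartite clique quotients of H) as a subgraph;
   a clique partition has at most |V(H)| parts *)
Definition FH_free (W V : finType) (h : rel W) (g : rel V) : bool :=
  ~~ [exists k : 'I_(#|W|.+1), exists p : {ffun W -> 'I_k},
        [&& clique_partition h p, bipartite (quotient h p)
          & contains_sub (quotient h p) g]].

Definition ex_fam (W : finType) (h : rel W) (n : nat) : nat :=
  \max_(S : {set {set 'I_n}} | [forall s in S, #|s| == 2] && FH_free h (graph_of S))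
     #|S|.

(* Main.v *)
Require Import Defs.
From mathcomp Require Import all_boot all_order all_algebra all_fingroup.
Import GRing.Theory Num.Theory.
Set Implicit Arguments. Unset Strict Implicit. Unset Printing Implicit Defensive.

Lemma set2_eq (T : finType) (x y u v : T) :
  [set x; y] = [set u; v] -> (x = u /\ y = v) \/ (x = v /\ y = u).
Proof.
move=> E.
have hx : x \in [set u; v] by rewrite -E set21.
have hy : y \in [set u; v] by rewrite -E set22.
have hu : u \in [set x; y] by rewrite E set21.
have hv : v \in [set x; y] by rewrite E set22.
move: hx hy hu hv => /set2P[]-> /set2P[]-> /set2P[] ? /set2P[] ?; subst; auto.
Qed.

Lemma card_sum (T : finType) (P : pred T) : #|[set x | P x]| = \sum_x (P x : nat).
Proof.
rewrite -sum1_card big_mkcond /=; apply: eq_bigr => x _; rewrite inE; by case: (P x).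
Qed.

Lemma card_sum_in (T : finType) (A : {set T}) (P : pred T) :
  #|[set x in A | P x]| = \sum_(x in A) (P x : nat).
Proof.
rewrite -sum1_card big_mkcond /= [RHS]big_mkcond /=; apply: eq_bigr => x _.
rewrite !inE; by case: (x \in A); case: (P x).
Qed.

Lemma card_col (k : nat) (a b : 'I_k) : a != b ->
  2 * #|[set c : {ffun 'I_k -> bool} | c a != c b]| = 2 ^ k.
Proof.
move=> ab.
set A := [set c : {ffun 'I_k -> bool} | c a != c b].
pose flip (c : {ffun 'I_k -> bool}) := [ffun i => if i == a then ~~ c a else c i].
have fK : cancel flip flip.
  move=> c; apply/ffunP => i; rewrite !ffunE eqxx.
  by case: eqP => [->|]; rewrite ?negbK.
have CA : ~: A = flip @: A.
  rewrite (can2_imset_pre _ fK fK); apply/setP => c.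
  rewrite !inE !ffunE eqxx [b == a]eq_sym (negbTE ab); by case: (c a); case: (c b).
have := cardsC A; rewrite CA (card_imset _ (can_inj fK)) card_ffun card_bool card_ord.
by move=> <-; rewrite mul2n addnn.
Qed.

Definition img2 k (a b : 'I_k) (s : {perm 'I_k}) : {set 'I_k} := [set s a; s b].

Lemma fib_le k (a b : 'I_k) (s s' : {set 'I_k}) : #|s| == 2 -> #|s'| == 2 ->
  #|[set t | img2 a b t == s]| <= #|[set t | img2 a b t == s']|.
Proof.
case/cards2P => u [v [uv ->]]; case/cards2P => u' [v' [uv' ->]].
pose t1 := tperm u u'. pose w := t1 v. pose t2 := tperm w v'. pose tau := (t1 * t2)%g.
have wu : w != u'.
  have : t1 v != t1 u by rewrite (inj_eq perm_inj) eq_sym.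
  by rewrite {2}/t1 tpermL.
have tu : t2 (t1 u) = u' by rewrite tpermL tpermD // eq_sym.
have tv : t2 (t1 v) = v' by rewrite tpermL.
rewrite -(card_imset _ (mulIg tau)); apply: subset_leq_card; apply/subsetP => x.
case/imsetP => t; rewrite inE => /eqP E ->; rewrite inE /img2 !permM.
by case: (set2_eq E) => [[-> ->]|[-> ->]]; rewrite tu tv // setUC.
Qed.
Lemma img2_card k (a b : 'I_k) t : a != b -> #|img2 a b t| == 2.
Proof. by move=> ab; rewrite cards2 (inj_eq perm_inj) ab. Qed.

Lemma perm_part k (a b : 'I_k) (X : {set {set 'I_k}}) :
  #|[set t | img2 a b t \in X]| = \sum_(s in X) #|[set t | img2 a b t == s]|.
Proof.
under [RHS]eq_bigr => s _ do rewrite card_sum.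
rewrite exchange_big /= card_sum; apply: eq_bigr => t _.
rewrite -big_mkcondr /=.
case: (boolP (img2 a b t \in X)) => H.
  rewrite (bigD1 (img2 a b t)) ?eqxx ?H //= big1 // => s /andP [/andP [_ /eqP E] ne].
  by rewrite E eqxx in ne.
by rewrite big1 // => s /andP [sX /eqP E]; rewrite E sX in H.
Qed.

Lemma perm_count k (a b : 'I_k) (F : {set {set 'I_k}}) : a != b ->
  {in F, forall s : {set 'I_k}, #|s| == 2} ->
  'C(k,2) * #|[set t | img2 a b t \in F]| = #|F| * #|{perm 'I_k}|.
Proof.
move=> ab F2.
pose m := #|[set t | img2 a b t == img2 a b 1%g]|.
have Hm : forall s : {set 'I_k}, #|s| == 2 -> #|[set t | img2 a b t == s]| = m.
  move=> s s2; apply/eqP; rewrite eqn_leq !fib_le //; exact: img2_card.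
have part : forall X : {set {set 'I_k}}, {in X, forall s : {set 'I_k}, #|s| == 2} ->
    #|[set t | img2 a b t \in X]| = #|X| * m.
  move=> X X2; rewrite perm_part -sum_nat_const; apply: eq_bigr => s sX.
  exact: Hm (X2 _ sX).
rewrite part // mulnCA; congr (_ * _).
have := part [set s : {set 'I_k} | #|s| == 2].
rewrite card_draws card_ord => <-; last by move=> s; rewrite inE.
apply: eq_card => t; rewrite !inE img2_card //.
Qed.
Definition keep2 (V : finType) k (f : {ffun V -> 'I_k}) (F : {set {set 'I_k}})
  (t : {perm 'I_k}) (c : {ffun 'I_k -> bool}) (x y : V) : bool :=
  (f x == f y) || ((c (f x) != c (f y)) && ([set t (f x); t (f y)] \in F)).

Lemma keep2C (V : finType) k f F t c (x y : V) : @keep2 V k f F t c x y = keep2 f F t c y x.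
Proof. by rewrite /keep2 eq_sym setUC [c (f y) == _]eq_sym. Qed.

Definition kp (V : finType) (g : rel V) k (f : {ffun V -> 'I_k}) (F : {set {set 'I_k}})
  (p : {perm 'I_k} * {ffun 'I_k -> bool}) (e : {set V}) : bool :=
  [exists x, exists y, [&& e == [set x; y], g x y & keep2 f F p.1 p.2 x y]].

Lemma kp_set2 (V : finType) (g : rel V) k f F p (x y : V) : g x y ->
  @kp V g k f F p [set x; y] = keep2 f F p.1 p.2 x y.
Proof.
move=> gxy; apply/idP/idP.
  case/existsP => x' /existsP [y' /and3P [/eqP E _ K]].
  by case: (set2_eq E) => [[-> ->]|[-> ->]]; rewrite // keep2C.
by move=> K; apply/existsP; exists x; apply/existsP; exists y; rewrite eqxx gxy.
Qed.

Definition Sg (V : finType) (g : rel V) k (f : {ffun V -> 'I_k}) (F : {set {set 'I_k}}) p :=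
  [set e in edges g | kp g f F p e].

Lemma in_edges (V : finType) (g : rel V) x y : g x y -> [set x; y] \in edges g.
Proof. by move=> gxy; apply/imset2P; exists x y; rewrite ?inE. Qed.

Lemma edgesP (V : finType) (g : rel V) e : e \in edges g -> exists x y, g x y /\ e = [set x; y].
Proof. by case/imset2P => x y _; rewrite inE => gxy ->; exists x, y. Qed.
Lemma Sg_free (W : finType) (h : rel W) (V : finType) (g : rel V) k
  (f : {ffun V -> 'I_k}) (F : {set {set 'I_k}}) p :
  (forall x y, x != y -> f x == f y -> g x y) -> FH_free h (graph_of F) -> 0 < k ->
  ~~ contains_induced h (graph_of (Sg g f F p)).
Proof.
move=> Hcl HF k0; apply/negP => /existsP [phi /andP [/injectiveP phinj /forallP Hphi]].
have Hphi' : forall x y, h x y = graph_of (Sg g f F p) (phi x) (phi y).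
  by move=> x y; have /forallP/(_ y)/eqP := Hphi x.
have Hgr : forall u v, graph_of (Sg g f F p) u v -> (u != v) && keep2 f F p.1 p.2 u v.
  move=> u v /andP [uv]; rewrite inE => /andP [/edgesP [x [y [gxy E]]]].
  rewrite E kp_set2 // uv /=.
  by case: (set2_eq E) => [[-> ->]|[-> ->]] //; rewrite keep2C.
pose q x := f (phi x).
pose I := [set q x | x in W].
pose s := enum I.
pose d := Ordinal k0.
have qI : forall x, q x \in s by move=> x; rewrite mem_enum; apply: imset_f.
have ltp : forall x, index (q x) s < #|I| by move=> x; rewrite cardE index_mem.
pose pp := [ffun x => Ordinal (ltp x)] : {ffun W -> 'I_#|I|}.
pose r := fun i : 'I_#|I| => nth d s i.
have rp : forall x, r (pp x) = q x by move=> x; rewrite /r ffunE /= nth_index.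
have r_inj : injective r.
  move=> i j /eqP; rewrite /r nth_uniq ?enum_uniq // -?cardE // => /eqP/val_inj //.
have pr : forall i, exists x, pp x = i.
  move=> i; have : r i \in I by rewrite -mem_enum mem_nth // -cardE.
  by case/imsetP => x _ E; exists x; apply: r_inj; rewrite rp E.
have Hq : forall i j, Defs.quotient h pp i j ->
    (r i != r j) && ((p.2 (r i) != p.2 (r j)) && ([set p.1 (r i); p.1 (r j)] \in F)).
  move=> i j /andP [ij /existsP [x /existsP [y /and3P [/eqP px /eqP py hxy]]]].
  subst i j; rewrite Hphi' in hxy; have /andP [_ K] := Hgr _ _ hxy.
  rewrite /keep2 in K; rewrite !rp; case/orP: K => [/eqP E|K].
    have E' : q x = q y by exact: E.
    by move: ij; rewrite -(inj_eq r_inj) !rp E' eqxx.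
  rewrite K andbT; apply/negP => /eqP E.
  have E' : f (phi x) = f (phi y) by exact: E.
  by move: K; rewrite E' eqxx.
have kW : #|I| < #|W|.+1 by rewrite ltnS leq_imset_card.
move/negP: HF; apply; apply/existsP; exists (Ordinal kW); apply/existsP; exists pp.
apply/and3P; split.
- apply/andP; split; apply/forallP => i.
    by have [x px] := pr i; apply/existsP; exists x; rewrite px.
  apply/forallP => y; apply/implyP => /andP [xy /eqP pxy].
  have fq : f (phi i) == f (phi y).
    by have := congr1 r pxy; rewrite !rp => E; apply/eqP; exact: E.
  have gi : g (phi i) (phi y) by apply: Hcl; rewrite ?(inj_eq phinj).
  by rewrite Hphi' /graph_of (inj_eq phinj) xy /= /Sg inE in_edges //= kp_set2 // /keep2 fq.
- apply/existsP; exists [ffun i => if p.2 (r i) then (ord0 : 'I_2) else ord_max].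
  apply/forallP => i; apply/forallP => j; apply/implyP => /Hq /and3P [_ cij _].
  by rewrite !ffunE; move: cij; case: (p.2 (r i)); case: (p.2 (r j)).
- apply/existsP; exists [ffun i => p.1 (r i)]; apply/andP; split.
    by apply/injectiveP => i j; rewrite !ffunE => /perm_inj/r_inj.
  apply/forallP => i; apply/forallP => j; apply/implyP => /Hq /and3P [rij _ inF].
  by rewrite /graph_of !ffunE (inj_eq perm_inj) rij.
Qed.
From mathcomp Require Import ring.
Lemma count_edge (V : finType) k (f : {ffun V -> 'I_k}) (F : {set {set 'I_k}}) (x y : V) :
  {in F, forall s : {set 'I_k}, #|s| == 2} ->
  #|F| * #|{: {perm 'I_k} * {ffun 'I_k -> bool}}|
    <= 2 * 'C(k,2) * #|[set p | keep2 f F p.1 p.2 x y]|.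
Proof.
move=> F2; case: (boolP (f x == f y)) => E.
  have -> : [set p | keep2 f F p.1 p.2 x y] = setT.
    by apply/setP => p; rewrite !inE /keep2 E.
  rewrite cardsT leq_mul2r; apply/orP; right.
  apply: leq_trans (leq_pmull _ _) => //.
  have := card_draws 'I_k 2; rewrite card_ord => <-; apply: subset_leq_card; apply/subsetP => s sF.
  by rewrite inE F2.
have -> : [set p | keep2 f F p.1 p.2 x y] =
    setX [set t | img2 (f x) (f y) t \in F] [set c : {ffun 'I_k -> bool} | c (f x) != c (f y)].
  by apply/setP => -[t c]; rewrite !inE /keep2 (negbTE E) /= andbC.
rewrite cardsX card_prod card_ffun card_bool card_ord -(card_col E).
set N := #|[set t | img2 (f x) (f y) t \in F]|.
set B := #|[set c : {ffun 'I_k -> bool} | c (f x) != c (f y)]|.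
have PC : 'C(k,2) * N = #|F| * #|{perm 'I_k}| := perm_count E F2.
have -> : 2 * 'C(k,2) * (N * B) = ('C(k,2) * N) * (2 * B) by ring.
by rewrite PC mulnA.
Qed.
Lemma Sg_le (W : finType) (h : rel W) (V : finType) (g : rel V) k
  (f : {ffun V -> 'I_k}) (F : {set {set 'I_k}}) p :
  (forall x y, x != y -> f x == f y -> g x y) -> FH_free h (graph_of F) -> 0 < k ->
  #|Sg g f F p| <= ex_ind h g.
Proof.
move=> Hcl HF k0; apply: (leq_bigmax_cond (Sg g f F p)).
rewrite Sg_free // andbT; apply/subsetP => e; by rewrite inE => /andP [].
Qed.

Lemma key (W : finType) (h : rel W) (V : finType) (g : rel V) k
  (f : {ffun V -> 'I_k}) (F : {set {set 'I_k}}) :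
  (forall x y, x != y -> f x == f y -> g x y) ->
  {in F, forall s : {set 'I_k}, #|s| == 2} ->
  FH_free h (graph_of F) -> 0 < k ->
  nedges g * #|F| <= 2 * 'C(k,2) * ex_ind h g.
Proof.
move=> Hcl F2 HF k0.
pose PT := ({perm 'I_k} * {ffun 'I_k -> bool})%type.
have P0 : 0 < #|{: PT}| by apply/card_gt0P; exists (1%g, [ffun => true]).
rewrite -(leq_pmul2r P0).
have le1 : \sum_(p : PT) #|Sg g f F p| <= #|{: PT}| * ex_ind h g.
  have := @leq_sum PT (index_enum PT) xpredT _ _ (fun (p : PT) (_ : true) => @Sg_le _ h _ g k f F p Hcl HF k0).
  move=> /leq_trans; apply.
  by rewrite sum_nat_const.
have eq1 : \sum_(p : PT) #|Sg g f F p| = \sum_(e in edges g) #|[set p : PT | kp g f F p e]|.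
  rewrite (eq_bigr (fun p => \sum_(e in edges g) (kp g f F p e : nat))); last by move=> p _; rewrite /Sg card_sum_in.
  by rewrite exchange_big; apply: eq_bigr => e _; rewrite card_sum.
apply: (@leq_trans (2 * 'C(k,2) * \sum_(p : PT) #|Sg g f F p|)).
  rewrite eq1 big_distrr /= /nedges -mulnA -sum_nat_const; apply: leq_sum => e.
  case/edgesP => x [y [gxy ->]].
  have -> : [set p : PT | kp g f F p [set x; y]] = [set p : PT | keep2 f F p.1 p.2 x y].
    by apply/setP => p; rewrite !inE kp_set2.
  exact: count_edge.
by rewrite -mulnA (mulnC _ #|{: PT}|) mulnA [X in _ <= X]mulnCA leq_mul2l le1 orbT.
Qed.
From mathcomp Require Import lra.
Lemma chi_col (V : finType) (e : rel V) : (forall x, ~~ e x x) -> colourable e (chi e).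
Proof.
move=> loopless; rewrite /chi; apply: (big_ind (colourable e)).
- apply/existsP; exists [ffun x => enum_rank x]; apply/forallP => x; apply/forallP => y.
  apply/implyP => exy; rewrite !ffunE (inj_eq enum_rank_inj).
  by apply/negP => /eqP xy; subst y; move: (loopless x); rewrite exy.
- by move=> a b Ha Hb; rewrite /minn; case: ifP.
- by [].
Qed.

Lemma compl_loopless (V : finType) (g : rel V) x : ~~ compl g x x.
Proof. by rewrite /compl eqxx. Qed.

Local Open Scope ring_scope.

Theorem corollary2p4 (W : finType) (h : rel W) (V : finType) (g : rel V) :
  simple_graph h -> simple_graph g ->
  (1 / 2 : rat) * (nedges g)%:R * (ex_fam h (chi (compl g)))%:R
     / ('C(chi (compl g), 2))%:R
  <= (ex_ind h g)%:R.
Proof.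
move=> _ _.
have := @chi_col V (compl g) (@compl_loopless V g).
set k := chi (compl g) => /existsP [f /forallP Hf].
have Hcl : forall x y, x != y -> f x == f y -> g x y.
  move=> x y xy fxy; apply/negPn/negP => ngxy.
  have := Hf x => /forallP/(_ y)/implyP; rewrite /compl xy ngxy => /(_ isT).
  by rewrite fxy.
case: (ltnP k 2) => k2.
  by rewrite bin_small // invr0 mulr0 ler0n.
have k0 : (0 < k)%N by apply: leq_trans k2.
pose P := fun S : {set {set 'I_k}} => [forall s in S, #|s| == 2] && FH_free h (graph_of S).
case: (pickP P) => [S0 PS0|none]; last first.
  by rewrite /ex_fam big_pred0 // mulr0 mul0r ler0n.
have [F PF ->] : exists2 F, P F & ex_fam h k = #|F|.
  exists [arg max_(i > S0 | P i) #|i|]; first by case: arg_maxnP.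
  exact: bigmax_eq_arg.
case/andP: PF => /forall_inP F2 HF.
have := key Hcl F2 HF k0.
rewrite -(ler_nat rat) !natrM => H.
have C0 : 0 < ('C(k, 2))%:R :> rat by rewrite ltr0n bin_gt0.
rewrite ler_pdivrMr //.
nra.
Qed.
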